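(* Let $\alpha=\exp\left(\frac{2\pi i}{5}\right)$, let $c,x\in\mathbb{C}$, and let $(a_1,A_1),\dots,(a_p,A_p)$ and $(b_1,B_1),\dots,(b_q,B_q)$ be parameter pairs ($a_j,b_j\in\mathbb{C}$, $A_j,B_j$ nonzero reals) such that all Pochhammer symbols involved are well defined and all series involved converge. Then $$\sum_{k=0}^{4}\alpha^{k}\,{}_p\Psi^{*}_q\left[\begin{array}{c}(a_1,A_1),\dots,(a_p,A_p);\\(b_1,B_1),\dots,(b_q,B_q);\end{array} c(x\alpha^k)^2\right] =\frac{(a_1)_{2A_1}\cdots(a_p)_{2A_p}}{(b_1)_{2B_1}\cdots(b_q)_{2B_q}}\,\frac{5c^2x^4}{2}\;{}_p\Psi^{*}_{q+4}\left[\begin{array}{c}(a_1+2A_1,5A_1),\dots,(a_p+2A_p,5A_p);\\ \left(\tfrac35,1\right),\left(\tfrac45,1\right),\left(\tfrac65,1\right),\left(\tfrac75,1\right),(b_1+2B_1,5B_1),\dots,(b_q+2B_q,5B_q);\end{array}\left(\frac{cx^2}{5}\right)^5\right].$$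
   Context: For $\lambda,\nu\in\mathbb{C}$ the Pochhammer symbol is $(\lambda)_\nu=\Gamma(\lambda+\nu)/\Gamma(\lambda)$ (with $(\lambda)_0=1$). The normalized Fox–Wright function is $${}_p\Psi^{*}_q\left[\begin{array}{c}(\alpha_1,A_1),\dots,(\alpha_p,A_p);\\(\beta_1,B_1),\dots,(\beta_q,B_q);\end{array}z\right]=\sum_{n=0}^{\infty}\frac{(\alpha_1)_{nA_1}\cdots(\alpha_p)_{nA_p}}{(\beta_1)_{nB_1}\cdots(\beta_q)_{nB_q}}\frac{z^n}{n!},$$ where $\alpha_i,\beta_j\in\mathbb{C}$ and $A_i,B_j$ are nonzero reals. Values of parameters and variables for which the expressions do not make sense are excluded. *)

(* Defs.v *)
From Stdlib Require Import Reals List Arith.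
From Coquelicot Require Import Coquelicot.
Open Scope C_scope.

Definition Cexp (z : C) : C :=
  (exp (Re z) * cos (Im z), exp (Re z) * sin (Im z))%R.

Definition natCpow (n : nat) (z : C) : C := Cexp (z * RtoC (ln (INR n))).

Definition euler_seq (z : C) (n : nat) : C :=
  RtoC (INR (fact n)) * natCpow n z /
  fold_right Cmult 1 (map (fun k => z + RtoC (INR k)) (seq 0 (S n))).

(* Complex Gamma function, defined by Euler's limit formula
   Gamma(z) = lim_{n -> oo} n! n^z / (z(z+1)...(z+n)),
   valid for z not in {0,-1,-2,...}. *)
Definition CGamma (z : C) : C :=
  @iota (CompleteNormedModule.CompleteSpace _ C_CompleteNormedModule) (fun l : C => filterlim (euler_seq z) eventually (locally l)).

Definition Gamma_pole (z : C) : Prop := exists k : nat, z = RtoC (- INR k).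

Definition Poch (lam : C) (nu : R) : C := CGamma (lam + RtoC nu) / CGamma lam.

Definition CSeries (a : nat -> C) : C := @iota (CompleteNormedModule.CompleteSpace _ C_CompleteNormedModule) (fun l : C => is_series a l).

Definition poch_prod (ps : list (C * R)) (n : nat) : C :=
  fold_right Cmult 1 (map (fun p => Poch (fst p) (INR n * snd p)) ps).

Definition FW_term (ps qs : list (C * R)) (z : C) (n : nat) : C :=
  poch_prod ps n / poch_prod qs n * (z ^ n) / RtoC (INR (fact n)).

Definition FoxWright (ps qs : list (C * R)) (z : C) : C :=
  CSeries (FW_term ps qs z).

(* Admissible parameter pair (a, A): A nonzero real and every Gamma argument
   a + m A (m = 0,1,2,...) occurring in the Pochhammer symbols is not a pole. *)
Definition admissible (p : C * R) : Prop :=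
  snd p <> 0%R /\ forall m : nat, ~ Gamma_pole (fst p + RtoC (INR m * snd p)).

Definition shift25 (p : C * R) : C * R :=
  (fst p + RtoC (2 * snd p), (5 * snd p)%R).

Definition alpha5 : C := Cexp (0%R, (2 * PI / 5)%R).

(* Main.v *)
Require Import Defs.
From Stdlib Require Import Reals List Arith Lia Lra.
From Coquelicot Require Import Coquelicot.

Open Scope C_scope.

Lemma Ceq (a b : C) : fst a = fst b -> snd a = snd b -> a = b.
Proof. destruct a, b; simpl; intros; subst; auto. Qed.

Lemma Cexp_add a b : Cexp (a + b) = Cexp a * Cexp b.
Proof.
  destruct a as [a1 a2], b as [b1 b2]. unfold Cexp, Cplus, Cmult, Re, Im; simpl.
  rewrite exp_plus, cos_plus, sin_plus. apply Ceq; simpl; ring.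
Qed.

Lemma Cexp_0 : Cexp 0 = 1.
Proof. unfold Cexp, Re, Im; simpl. rewrite exp_0, cos_0, sin_0. apply Ceq; simpl; ring. Qed.

Lemma Cmod_Cexp z : Cmod (Cexp z) = exp (Re z).
Proof.
  unfold Cexp, Cmod; cbn [fst snd].
  replace ((exp (Re z) * cos (Im z)) ^ 2 + (exp (Re z) * sin (Im z)) ^ 2)%R
    with (exp (Re z) ^ 2)%R.
  - rewrite sqrt_pow2; auto. left; apply exp_pos.
  - pose proof (sin2_cos2 (Im z)). unfold Rsqr in H. nra.
Qed.

Lemma Cexp_nz z : Cexp z <> 0.
Proof.
  intro H. pose proof (Cmod_Cexp z). rewrite H, Cmod_0 in H0.
  pose proof (exp_pos (Re z)). lra.
Qed.

Lemma Cexp_R (r : R) : Cexp (RtoC r) = RtoC (exp r).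
Proof. unfold Cexp, Re, Im, RtoC; simpl. rewrite cos_0, sin_0. apply Ceq; simpl; ring. Qed.
Open Scope R_scope.

Lemma Rabs_le_inv x b : Rabs x <= b -> - b <= x <= b.
Proof. unfold Rabs; destruct Rcase_abs; lra. Qed.

Lemma exp_bd u : Rabs u <= 1/2 -> 0 <= exp u - 1 - u <= 2 * u^2.
Proof.
  intros Hu. apply Rabs_le_inv in Hu. split.
  - pose proof (exp_ineq1_le u); lra.
  - pose proof (exp_ineq1_le (-u)).
    assert (exp u * exp (-u) = 1) by (rewrite <- exp_plus; replace (u + -u) with 0 by ring; apply exp_0).
    pose proof (exp_pos u).
    assert (exp u * (1 - u) <= 1) by nra.
    assert ((1 + u + 2*u^2) * (1 - u) >= 1) by nra.
    nra.
Qed.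

Lemma cos_bd v : Rabs v <= 1 -> 1 - v^2/2 <= cos v <= 1.
Proof.
  intros Hv. apply Rabs_le_inv in Hv. split.
  - destruct (pre_cos_bound v 0) as [H1 _]; try lra.
    unfold cos_approx, cos_term in H1. simpl in H1. lra.
  - apply COS_bound.
Qed.

Lemma sin_bd_pos a : 0 <= a <= 1 -> a - a^3/6 <= sin a <= a.
Proof.
  intros Ha. destruct (pre_sin_bound a 0) as [H1 H2]; try lra.
  unfold sin_approx, sin_term in H1, H2. simpl in H1, H2.
  assert (H2' : sin a <= a - a^3/6 + a^5/120) by (eapply Rle_trans; [exact H2|right; field]).
  assert (H1' : a - a^3/6 <= sin a) by (eapply Rle_trans; [|exact H1]; right; field).
  assert (a^5 <= a^3) by (replace (a^5) with (a^3*a^2) by ring; assert (0 <= a^3) by (apply pow_le; lra); assert (a^2 <= 1) by nra; nra).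
  assert (0 <= a^3) by (apply pow_le; lra).
  split; nra.
Qed.

Lemma sin_bd v : Rabs v <= 1 -> Rabs (sin v - v) <= v^2 /\ Rabs (sin v) <= Rabs v.
Proof.
  intros Hv. apply Rabs_le_inv in Hv.
  destruct (Rle_dec 0 v).
  - destruct (sin_bd_pos v) as [H1 H2]; try lra.
    assert (v^3 <= v^2) by (replace (v^3) with (v^2*v) by ring; assert (0 <= v^2) by nra; nra).
    assert (0 <= v^2) by nra. assert (v^2 <= v) by nra.
    rewrite (Rabs_right v) by lra. split; apply Rabs_le; lra.
  - set (a := -v). assert (0 <= a <= 1) by (unfold a; lra).
    destruct (sin_bd_pos a) as [H1 H2]; try lra. unfold a in H1, H2; rewrite sin_neg in H1, H2.
    fold a in H1, H2.
    assert (a^3 <= a^2) by (replace (a^3) with (a^2*a) by ring; assert (0 <= a^2) by nra; nra).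
    assert (v^2 = a^2) by (unfold a; ring). assert (0 <= a^2) by nra. assert (a^2 <= a) by nra.
    rewrite (Rabs_left v) by lra. split; apply Rabs_le; unfold a in *; lra.
Qed.

Open Scope C_scope.
Lemma Cmod_le_sum (x : C) : Cmod x <= Rabs (fst x) + Rabs (snd x).
Proof.
  unfold Cmod. destruct x as [a b]; cbn [fst snd].
  rewrite <- (sqrt_pow2 (Rabs a + Rabs b)) by (pose proof (Rabs_pos a); pose proof (Rabs_pos b); lra).
  apply sqrt_le_1_alt.
  pose proof (Rabs_pos a); pose proof (Rabs_pos b).
  replace (a^2)%R with (Rabs a ^ 2)%R by (unfold Rabs; destruct Rcase_abs; ring).
  replace (b^2)%R with (Rabs b ^ 2)%R by (unfold Rabs; destruct Rcase_abs; ring).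
  nra.
Qed.

Lemma Cexp_taylor w : Cmod w <= 1/2 -> Cmod (Cexp w - 1 - w) <= 3 * Cmod w ^ 2.
Proof.
  intros Hw. destruct w as [u v].
  pose proof (Rmax_Cmod (u,v)) as HM. cbn [fst snd] in HM.
  assert (Hu : Rabs u <= 1/2) by (eapply Rle_trans; [|exact Hw]; eapply Rle_trans; [apply Rmax_l|exact HM]).
  assert (Hv : Rabs v <= 1/2) by (eapply Rle_trans; [|exact Hw]; eapply Rle_trans; [apply Rmax_r|exact HM]).
  rewrite Cmod2_alt. unfold Re, Im; cbn [fst snd].
  eapply Rle_trans; [apply Cmod_le_sum|].
  unfold Cexp, Re, Im, Cminus, Cplus, Copp; cbn [fst snd].
  destruct (exp_bd u Hu) as [E1 E2].
  destruct (cos_bd v) as [C1 C2]; [lra|].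
  destruct (sin_bd v) as [S1 S2]; [lra|].
  apply Rabs_le_inv in S1. apply Rabs_le_inv in Hu. apply Rabs_le_inv in Hv.
  set (E := exp u) in *. set (c := cos v) in *. set (s := sin v) in *.
  assert (HE : E <= 2) by nra.
  assert (A1 : Rabs (E * c + - (1) + - u) <= v^2 + 2*u^2).
  { apply Rabs_le. assert (0 <= E) by (unfold E; left; apply exp_pos). nra. }
  assert (A2 : Rabs (E * s + - 0 + - v) <= 2 * Rabs u * Rabs v + v^2).
  { replace (E * s + - 0 + - v)%R with ((E - 1) * s + (s - v))%R by ring.
    eapply Rle_trans; [apply Rabs_triang|]. rewrite Rabs_mult.
    assert (Rabs (E - 1) <= 2 * Rabs u) by (apply Rabs_le; unfold Rabs; destruct Rcase_abs; nra).
    assert (Rabs (s - v) <= v^2) by (apply Rabs_le; lra).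
    pose proof (Rabs_pos s). pose proof (Rabs_pos (E-1)). nra. }
  assert (2 * Rabs u * Rabs v <= u^2 + v^2).
  { replace (u^2)%R with (Rabs u ^2)%R by (unfold Rabs; destruct Rcase_abs; ring).
    replace (v^2)%R with (Rabs v ^2)%R by (unfold Rabs; destruct Rcase_abs; ring). pose proof (pow2_ge_0 (Rabs u - Rabs v)). nra. }
  change (fst (RtoC 1)) with 1%R. change (snd (RtoC 1)) with 0%R. lra.
Qed.

Open Scope C_scope.
Lemma Cplus_plus (x y : C) : plus x y = x + y. Proof. reflexivity. Qed.
Lemma Rplus_plus (x y : R) : plus x y = (x + y)%R. Proof. reflexivity. Qed.
Lemma Cminus_minus (x y : C) : minus x y = x - y. Proof. reflexivity. Qed.
Lemma Cscal_mult (x y : C) : scal x y = x * y. Proof. reflexivity. Qed.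

Lemma filterlim_shift (a : nat -> C) l :
  filterlim (fun n => a (S n)) eventually (locally l) -> filterlim a eventually (locally l).
Proof.
  intros H P HP. destruct (H P HP) as [N HN]. exists (S N). intros n Hn.
  destruct n; [lia|]. apply HN; lia.
Qed.

Lemma sum_n_mono (t : nat -> R) : (forall n, 0 <= t n)%R -> forall n m, (n <= m)%nat -> (sum_n t n <= sum_n t m)%R.
Proof.
  intros Ht n m Hnm. induction Hnm. lra.
  rewrite sum_Sn, Rplus_plus. specialize (Ht (S m)). lra.
Qed.

Lemma sum_n_le_lim (t : nat -> R) T : (forall n, 0 <= t n)%R -> is_series t T -> forall n, (sum_n t n <= T)%R.
Proof.
  intros Ht HT n. destruct (Rle_dec (sum_n t n) T) as [|Hn]; auto. exfalso.
  assert (HL : is_lim_seq (sum_n t) T) by exact HT.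
  apply is_lim_seq_spec in HL.
  assert (He : (0 < sum_n t n - T)%R) by lra.
  destruct (HL (mkposreal _ He)) as [N HN]. simpl in HN.
  specialize (HN (max N n) (Nat.le_max_l _ _)).
  pose proof (sum_n_mono t Ht n (max N n) (Nat.le_max_r _ _)).
  apply Rabs_lt_between in HN. lra.
Qed.

Lemma sum_n_telescope (a : nat -> C) n : sum_n (fun k => a (S k) - a k) n = a (S n) - a O.
Proof.
  induction n. rewrite sum_O. reflexivity.
  rewrite sum_Sn, IHn. match goal with |- @eq _ ?x ?y => change (@eq C x y) end. unfold plus; simpl. ring.
Qed.

Lemma prod_conv_weak (a r : nat -> C) :
  (forall n, a (S n) = a n * r n) -> ex_series (fun n => Cmod (r n - 1)) ->
  exists l, filterlim a eventually (locally l).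
Proof.
  intros Ha [T HT]. set (t := fun n => Cmod (r n - 1)) in *.
  assert (Ht : forall n, (0 <= t n)%R) by (intros; apply Cmod_ge_0).
  assert (Hr : forall n, (Cmod (r n) <= exp (t n))%R).
  { intros n. eapply Rle_trans; [|apply exp_ineq1_le].
    replace (r n) with (1 + (r n - 1)) at 1 by ring.
    eapply Rle_trans; [apply Cmod_triangle|]. rewrite Cmod_1. unfold t; lra. }
  assert (Hb : forall n, (Cmod (a (S n)) <= Cmod (a O) * exp (sum_n t n))%R).
  { induction n.
    - rewrite sum_O, Ha, Cmod_mult. apply Rmult_le_compat_l; [apply Cmod_ge_0|apply Hr].
    - rewrite sum_Sn, Rplus_plus, exp_plus, Ha, Cmod_mult.
      rewrite <- Rmult_assoc. apply Rmult_le_compat; try apply Cmod_ge_0; auto. }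
  set (M := (Cmod (a O) * exp T + Cmod (a O))%R).
  assert (HM : forall n, (Cmod (a n) <= M)%R).
  { intros [|n]; unfold M.
    - pose proof (exp_pos T); pose proof (Cmod_ge_0 (a O)). nra.
    - pose proof (exp_pos T); pose proof (Cmod_ge_0 (a O)).
      eapply Rle_trans; [apply Hb|].
      assert (exp (sum_n t n) <= exp T)%R by (destruct (Req_dec (sum_n t n) T) as [->|]; [lra|left; apply exp_increasing; pose proof (sum_n_le_lim t T Ht HT n); lra]).
      nra. }
  assert (Hd : ex_series (fun n => a (S n) - a n)).
  { apply (@ex_series_le C_AbsRing C_CompleteNormedModule) with (b := fun n => (M * t n)%R).
    - intros n. change (Cmod (a (S n) - a n) <= M * t n)%R. rewrite Ha.
      replace (a n * r n - a n) with (a n * (r n - 1)) by ring. rewrite Cmod_mult.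
      apply Rmult_le_compat_r; auto.
    - exists (M * T)%R. apply (is_series_scal M t T HT). }
  destruct Hd as [D HD]. exists (D + a O).
  apply filterlim_shift.
  apply (filterlim_ext (fun n => sum_n (fun k => a (S k) - a k) n + a O)).
  { intros n. rewrite sum_n_telescope. ring. }
  eapply filterlim_comp_2; [exact HD| apply filterlim_const |].
  apply (filterlim_plus D (a O)).
Qed.

Lemma Cmod_inv_sub1 (r : C) : (Cmod (r - 1) <= 1/2)%R -> (Cmod (/ r - 1) <= 2 * Cmod (r - 1))%R.
Proof.
  intros H.
  assert (Hr : (1/2 <= Cmod r)%R).
  { pose proof (Cmod_triangle r (1 - r)). replace (r + (1 - r)) with (RtoC 1) in H0 by ring.
    rewrite Cmod_1 in H0. replace (1 - r) with (- (r - 1)) in H0 by ring. rewrite Cmod_opp in H0. lra. }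
  assert (rnz : r <> 0) by (intro E; subst; rewrite Cmod_0 in Hr; lra).
  replace (/ r - 1) with (- (r - 1) / r) by (field; auto).
  rewrite Cmod_div by auto. rewrite Cmod_opp.
  unfold Rdiv. pose proof (Cmod_ge_0 (r - 1)).
  assert (/ Cmod r <= 2)%R.
  { replace 2%R with (/ (1/2))%R by field. apply Rinv_le_contravar; lra. }
  nra.
Qed.

Lemma lim_C_to_K (f : nat -> C) (l : C) :
  filterlim f eventually (locally l) ->
  filterlim f eventually (@locally (AbsRing_UniformSpace C_AbsRing) l).
Proof.
  intros H P [eps HP].
  assert (He : (0 < eps / 2)%R) by (destruct eps; simpl; lra).
  destruct (proj1 (filterlim_locally f l) H (mkposreal _ He)) as [N HN].
  exists N. intros n Hn. apply HP. specialize (HN n Hn).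
  apply C_NormedModule_mixin_compat2 in HN. simpl in HN.
  change (Cmod (minus (f n) l) < eps)%R.
  assert (sqrt 2 < 2)%R.
  { rewrite <- (sqrt_pow2 2) at 2 by lra. apply sqrt_lt_1_alt; lra. }
  destruct eps as [e ep]; simpl in *. assert (0 < (2 - sqrt 2) * e)%R by (apply Rmult_lt_0_compat; lra). eapply Rlt_le_trans; [exact HN|]. nra.
Qed.

Lemma filterlim_Cmult (f g : nat -> C) l1 l2 :
  filterlim f eventually (locally l1) -> filterlim g eventually (locally l2) ->
  filterlim (fun n => f n * g n) eventually (locally (l1 * l2)).
Proof.
  intros H1 H2. apply lim_C_to_K in H1.
  apply (filterlim_comp_2 (G := @locally (AbsRing_UniformSpace C_AbsRing) l1) f g (fun x y => @scal C_AbsRing C_NormedModule x y) H1 H2).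
  exact (@filterlim_scal C_AbsRing C_NormedModule l1 l2).
Qed.

Lemma prod_conv (a r : nat -> C) :
  (forall n, a (S n) = a n * r n) -> a O <> 0 -> (forall n, r n <> 0) ->
  ex_series (fun n => Cmod (r n - 1)) ->
  exists l : C, l <> 0 /\ filterlim a eventually (locally l).
Proof.
  intros Ha Ha0 Hr Hs.
  destruct (prod_conv_weak a r Ha Hs) as [l Hl].
  assert (Hnz : forall n, a n <> 0).
  { induction n; auto. rewrite Ha. apply Cmult_neq_0; auto. }
  assert (Hs' : ex_series (fun n => Cmod (/ r n - 1))).
  { pose proof (ex_series_lim_0 _ Hs) as H0. apply is_lim_seq_spec in H0.
    assert (Hh : (0 < 1/2)%R) by lra.
    destruct (H0 (mkposreal _ Hh)) as [N HN]. simpl in HN.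
    apply (ex_series_incr_n _ N).
    apply (@ex_series_le R_AbsRing R_CompleteNormedModule) with (b := fun k => (2 * Cmod (r (N + k)%nat - 1))%R).
    - intros k. change (Rabs (Cmod (/ r (N + k)%nat - 1)) <= 2 * Cmod (r (N + k)%nat - 1))%R.
      rewrite Rabs_right by (apply Rle_ge, Cmod_ge_0).
      apply Cmod_inv_sub1. specialize (HN (N + k)%nat ltac:(lia)).
      rewrite Rminus_0_r, Rabs_right in HN by (apply Rle_ge, Cmod_ge_0). lra.
    - apply (@ex_series_scal R_AbsRing R_NormedModule 2%R (fun k => Cmod (r (N + k)%nat - 1))). apply (ex_series_incr_n (fun n => Cmod (r n - 1)) N). exact Hs. }
  destruct (prod_conv_weak (fun n => / a n) (fun n => / r n)) as [l' Hl'].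
  { intros n. rewrite Ha. field. split; auto. }
  { exact Hs'. }
  exists l. split; auto.
  pose proof (filterlim_Cmult _ _ _ _ Hl Hl') as Hp.
  assert (H1 : filterlim (fun n => a n * / a n) eventually (locally (RtoC 1))).
  { apply (filterlim_ext (fun _ => RtoC 1)). intros n. field. auto. apply filterlim_const. }
  pose proof (filterlim_locally_unique _ _ _ Hp H1) as E.
  intro L0. rewrite L0 in E. rewrite Cmult_0_l in E. apply C1_nz. auto.
Qed.

Open Scope R_scope.
Lemma Rplus_plus' (x y : R) : plus x y = (x + y)%R. Proof. reflexivity. Qed.

Lemma ex_series_tel : ex_series (fun n => / ((INR n + 1) * (INR n + 2))).
Proof.
  exists 1. unfold is_series.
  change (is_lim_seq (sum_n (fun n => / ((INR n + 1) * (INR n + 2)))) 1).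
  apply is_lim_seq_ext with (u := fun n => 1 - / INR (n + 2)).
  { intros n. induction n.
    - rewrite sum_O. simpl. field.
    - rewrite sum_Sn, Rplus_plus', <- IHn. rewrite !plus_INR, S_INR. simpl. field.
      split; pose proof (pos_INR n); lra. }
  replace (Finite 1) with (Finite (1 - 0)) by (f_equal; ring).
  apply is_lim_seq_minus'. apply is_lim_seq_const.
  replace (Finite 0) with (Rbar_inv p_infty) by reflexivity.
  apply is_lim_seq_inv; [|discriminate].
  apply (is_lim_seq_incr_n INR 2). apply is_lim_seq_INR.
Qed.

Lemma ex_series_eventually (s b : nat -> R) N :
  (forall n, (N <= n)%nat -> 0 <= s n <= b n) -> ex_series b -> ex_series s.
Proof.
  intros H Hb. apply (ex_series_incr_n s N).
  apply (@ex_series_le R_AbsRing R_CompleteNormedModule) with (b := fun k => b (N + k)%nat).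
  - intros k. change (Rabs (s (N + k)%nat) <= b (N + k)%nat).
    destruct (H (N + k)%nat ltac:(lia)). rewrite Rabs_right; lra.
  - apply (ex_series_incr_n b N). exact Hb.
Qed.

Lemma ln_le_sub1 y : 0 < y -> ln y <= y - 1.
Proof.
  intros Hy. rewrite <- (ln_exp (y - 1)). apply ln_le; auto.
  pose proof (exp_ineq1_le (y - 1)). lra.
Qed.

Lemma ln_ratio_bd m : 0 < m -> 1/(m+1) <= ln (m+1) - ln m <= 1/m.
Proof.
  intros Hm. split.
  - pose proof (ln_le_sub1 (m/(m+1)) ltac:(apply Rdiv_lt_0_compat; lra)).
    rewrite ln_div in H by lra.
    replace (m / (m+1) - 1) with (- (1/(m+1))) in H by (field; lra). lra.
  - pose proof (ln_le_sub1 ((m+1)/m) ltac:(apply Rdiv_lt_0_compat; lra)).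
    rewrite ln_div in H by lra.
    replace ((m+1) / m - 1) with (1/m) in H by (field; lra). lra.
Qed.
Open Scope C_scope.

Open Scope C_scope.

Definition Pr (z : C) (n : nat) : C :=
  fold_right Cmult 1 (map (fun k => z + RtoC (INR k)) (seq 0 (S n))).

Lemma fold_mult_c l c : fold_right Cmult c l = fold_right Cmult 1 l * c.
Proof. induction l; simpl. ring. rewrite IHl. ring. Qed.

Lemma Pr_S z n : Pr z (S n) = Pr z n * (z + RtoC (INR (S n))).
Proof.
  unfold Pr. rewrite (seq_S (S n) 0), map_app, fold_right_app. simpl.
  rewrite fold_mult_c. ring.
Qed.

Lemma Pr_0 z : Pr z 0 = z.
Proof. unfold Pr; simpl. ring. Qed.

Lemma nonpole_k z : ~ Gamma_pole z -> forall k, z + RtoC (INR k) <> 0.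
Proof.
  intros Hz k E. apply Hz. exists k.
  apply Ceq; simpl. 
  - apply (f_equal fst) in E; simpl in E. lra.
  - apply (f_equal snd) in E; simpl in E. lra.
Qed.

Lemma Pr_nz z : ~ Gamma_pole z -> forall n, Pr z n <> 0.
Proof.
  intros Hz n. induction n.
  - rewrite Pr_0. pose proof (nonpole_k z Hz 0). simpl in H. rewrite Cplus_0_r in H. auto.
  - rewrite Pr_S. apply Cmult_neq_0; auto. apply nonpole_k; auto.
Qed.

Definition rr (z : C) (m : nat) : C :=
  RtoC (INR (S (S m))) / (z + RtoC (INR (S (S m)))) *
  Cexp (z * RtoC (ln (INR (S (S m))) - ln (INR (S m)))).

Lemma RtoC_INR_S n : RtoC (INR (S n)) = RtoC (INR n) + 1.
Proof. rewrite S_INR. apply Ceq; simpl; ring. Qed.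

Lemma euler_rec z m : ~ Gamma_pole z -> euler_seq z (S (S m)) = euler_seq z (S m) * rr z m.
Proof.
  intros Hz. unfold euler_seq, rr, natCpow. fold (Pr z (S (S m))). fold (Pr z (S m)).
  rewrite (Pr_S z (S m)).
  replace (z * RtoC (ln (INR (S (S m))))) with
    (z * RtoC (ln (INR (S m))) + z * RtoC (ln (INR (S (S m))) - ln (INR (S m)))).
  2:{ rewrite <- Cmult_plus_distr_l. f_equal. apply Ceq; simpl; ring. }
  rewrite Cexp_add.
  replace (fact (S (S m))) with (S (S m) * fact (S m))%nat by reflexivity.
  rewrite mult_INR, RtoC_mult.
  field. split; [apply nonpole_k; auto | apply Pr_nz; auto].
Qed.

Lemma Cmod_RtoC_pos (r : R) : (0 <= r)%R -> Cmod (RtoC r) = r.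
Proof. intros. rewrite Cmod_R. apply Rabs_right. lra. Qed.

Lemma rr_bound z m : (2 * Cmod z + 2 <= INR m + 1)%R ->
  (Cmod (rr z m - 1) <= (12 * Cmod z ^ 2 + 2 * Cmod z) * / ((INR m + 1) * (INR m + 2)))%R.
Proof.
  intros Hm. unfold rr.
  set (M := (INR m + 1)%R) in *.
  assert (EM1 : INR (S m) = M) by (unfold M; rewrite S_INR; ring).
  assert (EM2 : INR (S (S m)) = (M + 1)%R) by (unfold M; rewrite !S_INR; ring).
  rewrite EM1, EM2. replace (INR m + 2)%R with (M + 1)%R by (unfold M; ring).
  pose proof (Cmod_ge_0 z) as Hz0.
  assert (HM : (0 < M)%R) by lra.
  set (L := (ln (M + 1) - ln M)%R).
  destruct (ln_ratio_bd M HM) as [L1 L2]. fold L in L1, L2.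
  set (w := z * RtoC L).
  assert (HL0 : (0 < L)%R) by (assert (0 < 1/(M+1))%R by (apply Rdiv_lt_0_compat; lra); lra).
  assert (Hw : Cmod w = (Cmod z * L)%R).
  { unfold w. rewrite Cmod_mult, Cmod_RtoC_pos by lra. reflexivity. }
  assert (Hw2 : (Cmod w <= 1/2)%R).
  { rewrite Hw. apply Rle_trans with (Cmod z * (1/M))%R. apply Rmult_le_compat_l; lra.
    unfold Rdiv. rewrite Rmult_1_l. apply Rle_trans with (Cmod z * / (2 * Cmod z + 2))%R.
    apply Rmult_le_compat_l; auto. apply Rinv_le_contravar; lra.
    apply (Rmult_le_reg_r (2 * Cmod z + 2)); [lra|]. rewrite Rmult_assoc, Rinv_l by lra. lra. }
  pose proof (Cexp_taylor w Hw2) as HT. rewrite Hw in HT.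
  set (D := z + RtoC (M + 1)).
  assert (HD : (M + 1 - Cmod z <= Cmod D)%R).
  { pose proof (Cmod_triangle D (- z)). unfold D in H at 1.
    replace (z + RtoC (M + 1) + - z) with (RtoC (M+1)) in H by ring.
    rewrite Cmod_opp, Cmod_RtoC_pos in H by lra. lra. }
  assert (Dnz : D <> 0) by (intro E; rewrite E, Cmod_0 in HD; lra).
  replace (RtoC (M + 1) / D * Cexp w - 1) with
    ((RtoC (M + 1) * (Cexp w - 1 - w) + z * (RtoC ((M+1) * L - 1))) / D).
  2:{ unfold D, w. rewrite RtoC_minus, RtoC_mult. field. exact Dnz. }
  rewrite Cmod_div by auto.
  set (A := Cmod (Cexp w - 1 - w)) in *.
  assert (HB : (Rabs ((M+1) * L - 1) <= 1/M)%R).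
  { apply Rabs_le. split.
    - assert ((M+1) * (1/(M+1)) = 1)%R by (field; lra).
      assert (0 < 1/M)%R by (apply Rdiv_lt_0_compat; lra). nra.
    - assert ((M+1) * (1/M) = 1 + 1/M)%R by (field; lra). nra. }
  assert (HN : (Cmod (RtoC (M + 1) * (Cexp w - 1 - w) + z * RtoC ((M + 1) * L - 1))
             <= (M+1) * A + Cmod z * (1/M))%R).
  { eapply Rle_trans; [apply Cmod_triangle|]. rewrite !Cmod_mult, Cmod_RtoC_pos by lra.
    rewrite Cmod_R. fold A. pose proof (Cmod_ge_0 z). nra. }
  set (X := Cmod (RtoC (M + 1) * (Cexp w - 1 - w) + z * RtoC ((M + 1) * L - 1))) in *.
  set (K := (12 * Cmod z ^ 2 + 2 * Cmod z)%R).
  assert (HD2 : ((M+1)/2 <= Cmod D)%R) by lra.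
  assert (HA : (A <= 3 * Cmod z ^ 2 * (1/M)^2)%R).
  { eapply Rle_trans; [exact HT|].
    assert (0 <= Cmod z * L <= Cmod z * (1/M))%R by (split; [nra|apply Rmult_le_compat_l; lra]).
    assert ((Cmod z * L)^2 <= (Cmod z * (1/M))^2)%R by (apply pow_incr; lra).
    replace (3 * Cmod z ^ 2 * (1/M)^2)%R with (3 * (Cmod z * (1/M))^2)%R by ring. lra. }
  assert (HX : (X * (M * (M+1)) <= (M+1) * (6 * Cmod z^2 + Cmod z))%R).
  { assert (HX1 : (X <= (M+1) * (3 * Cmod z ^ 2 * (1/M)^2) + Cmod z * (1/M))%R).
    { eapply Rle_trans; [exact HN|]. apply Rplus_le_compat_r. apply Rmult_le_compat_l; lra. }
    assert (0 <= X)%R by apply Cmod_ge_0.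
    apply Rle_trans with (((M+1) * (3 * Cmod z ^ 2 * (1/M)^2) + Cmod z * (1/M)) * (M * (M+1)))%R.
    apply Rmult_le_compat_r; [nra|exact HX1].
    replace (((M+1) * (3 * Cmod z ^ 2 * (1/M)^2) + Cmod z * (1/M)) * (M * (M+1)))%R
      with ((M+1) * (3 * Cmod z ^ 2 * ((M+1)/M) + Cmod z))%R by (field; lra).
    apply Rmult_le_compat_l; [lra|].
    assert ((M+1)/M <= 2)%R.
    { apply (Rmult_le_reg_r M); [lra|]. unfold Rdiv. rewrite Rmult_assoc, Rinv_l by lra. lra. }
    assert (0 <= Cmod z ^ 2)%R by (apply pow2_ge_0). nra. }
  assert (HMM : (0 < M * (M+1))%R) by nra.
  assert (0 < Cmod D)%R by lra.
  unfold Rdiv.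
  apply (Rmult_le_reg_r (Cmod D * (M * (M+1)))); [nra|].
  replace (X * / Cmod D * (Cmod D * (M * (M + 1))))%R with (X * (M * (M+1)))%R by (field; lra).
  replace (K * / (M * (M + 1)) * (Cmod D * (M * (M + 1))))%R with (K * Cmod D)%R by (field; lra).
  unfold K. assert (0 <= Cmod z ^ 2)%R by (apply pow2_ge_0). nra.
Qed.

Lemma Cdiv_nz (x y : C) : x <> 0 -> y <> 0 -> x / y <> 0.
Proof. intros Hx Hy E. apply Hx. replace x with (x / y * y) by (field; auto). rewrite E. ring. Qed.

Lemma RtoC_INR_S_nz n : RtoC (INR (S n)) <> 0.
Proof. intro E. apply (f_equal fst) in E. change (INR (S n) = 0%R) in E. rewrite S_INR in E. pose proof (pos_INR n). lra. Qed.

Lemma euler_conv z : ~ Gamma_pole z ->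
  exists l : C, l <> 0 /\ filterlim (euler_seq z) eventually (locally l).
Proof.
  intros Hz.
  destruct (prod_conv (fun n => euler_seq z (S n)) (rr z)) as [l [Hl0 Hl]].
  - intros n. apply euler_rec; auto.
  - unfold euler_seq. apply Cdiv_nz; [|fold (Pr z 1); apply Pr_nz; auto].
    apply Cmult_neq_0; [apply RtoC_INR_S_nz|]. unfold natCpow. apply Cexp_nz.
  - intros n. unfold rr. apply Cmult_neq_0; [|apply Cexp_nz].
    apply Cdiv_nz; [apply RtoC_INR_S_nz|apply nonpole_k; auto].
  - destruct (INR_unbounded (2 * Cmod z + 2)) as [N HN].
    apply (ex_series_eventually _ (fun n => (12 * Cmod z ^ 2 + 2 * Cmod z) * / ((INR n + 1) * (INR n + 2)))%R N).
    + intros n Hn. split; [apply Cmod_ge_0|]. apply rr_bound.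
      apply le_INR in Hn. lra.
    + apply (@ex_series_scal R_AbsRing R_NormedModule _ (fun n => / ((INR n + 1) * (INR n + 2)))%R).
      apply ex_series_tel.
  - exists l. split; auto. apply filterlim_shift. exact Hl.
Qed.

Lemma Gamma_lim z : ~ Gamma_pole z ->
  CGamma z <> 0 /\ filterlim (euler_seq z) eventually (locally (CGamma z)).
Proof.
  intros Hz. destruct (euler_conv z Hz) as [l [Hl0 Hl]].
  assert (E : CGamma z = l).
  { unfold CGamma. apply (@iota_filterlim_locally C_AbsRing C_CompleteNormedModule). apply Proper_StrongProper. exact eventually_filter. exact Hl. }
  rewrite E. auto.
Qed.
Open Scope C_scope.

Open Scope C_scope.

Lemma C_lim_eps (f : nat -> C) (l : C) :
  (forall eps : R, (0 < eps)%R -> exists N, forall n, (N <= n)%nat -> (Cmod (f n - l) < eps)%R) ->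
  filterlim f eventually (locally l).
Proof.
  intros H. apply filterlim_locally. intros [e ep].
  destruct (H e ep) as [N HN]. exists N. intros n Hn.
  apply C_NormedModule_mixin_compat1. apply HN; auto.
Qed.

Lemma q_lim z : filterlim (fun n => RtoC (INR n) / (z + RtoC (INR (S n)))) eventually (locally (RtoC 1)).
Proof.
  apply C_lim_eps. intros eps Heps.
  destruct (INR_unbounded (Cmod z + (Cmod (z + 1)) / eps)) as [N HN].
  exists N. intros n Hn. apply le_INR in Hn.
  set (D := z + RtoC (INR (S n))).
  assert (HD : (INR (S n) - Cmod z <= Cmod D)%R).
  { pose proof (Cmod_triangle D (- z)). unfold D in H at 1.
    replace (z + RtoC (INR (S n)) + - z) with (RtoC (INR (S n))) in H by ring.
    rewrite Cmod_opp, Cmod_R, Rabs_right in H by (apply Rle_ge, pos_INR). lra. }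
  rewrite S_INR in HD.
  assert (Hq : (0 <= Cmod (z + 1) / eps)%R) by (apply Rdiv_le_0_compat; [apply Cmod_ge_0|lra]).
  assert (HD0 : (0 < Cmod D)%R) by lra.
  assert (Dnz : D <> 0) by (intro E; rewrite E, Cmod_0 in HD0; lra).
  replace (RtoC (INR n) / D - 1) with (- (z + 1) / D).
  2:{ unfold D in Dnz |- *. rewrite RtoC_INR_S in Dnz |- *. field. auto. }
  rewrite Cmod_div, Cmod_opp by auto.
  apply (Rmult_lt_reg_r (Cmod D)); auto. unfold Rdiv. rewrite Rmult_assoc, Rinv_l by lra.
  rewrite Rmult_1_r.
  assert (Cmod (z + 1) / eps < Cmod D)%R by lra.
  apply (Rmult_lt_compat_r eps) in H; auto. unfold Rdiv in H.
  rewrite Rmult_assoc, Rinv_l, Rmult_1_r in H by lra. lra.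
Qed.

Lemma nonpole_S z : ~ Gamma_pole z -> ~ Gamma_pole (z + 1).
Proof.
  intros Hz [k Hk]. apply Hz. exists (S k). rewrite S_INR.
  apply Ceq; [apply (f_equal fst) in Hk|apply (f_equal snd) in Hk]; simpl in *; lra.
Qed.

Lemma Pr_shift z n : Pr (z + 1) n * z = Pr z (S n).
Proof.
  induction n.
  - rewrite Pr_S, !Pr_0. simpl. apply Ceq; simpl; ring.
  - rewrite Pr_S, (Pr_S z (S n)), <- IHn. rewrite (RtoC_INR_S (S n)). ring.
Qed.

Lemma natCpow_S z n : natCpow (S n) (z + 1) = natCpow (S n) z * RtoC (INR (S n)).
Proof.
  unfold natCpow. rewrite Cmult_plus_distr_r, Cmult_1_l, Cexp_add, Cexp_R.
  rewrite exp_ln; auto. rewrite S_INR. pose proof (pos_INR n). lra.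
Qed.

Lemma euler_shift z n : ~ Gamma_pole z ->
  euler_seq (z + 1) (S n) = z * euler_seq z (S n) * (RtoC (INR (S n)) / (z + RtoC (INR (S (S n))))).
Proof.
  intros Hz. unfold euler_seq. fold (Pr (z+1) (S n)). fold (Pr z (S n)).
  rewrite natCpow_S.
  assert (E : Pr (z + 1) (S n) = Pr z (S n) * (z + RtoC (INR (S (S n)))) / z).
  { rewrite <- Pr_S, <- (Pr_shift z (S n)). unfold Cdiv. rewrite <- Cmult_assoc, Cinv_r, Cmult_1_r; auto. pose proof (nonpole_k z Hz 0). simpl in H. rewrite Cplus_0_r in H. auto. }
  rewrite E. field.
  pose proof (nonpole_k z Hz 0). simpl in H. rewrite Cplus_0_r in H.
  repeat split; auto; try apply nonpole_k; auto; apply Pr_nz; auto.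
Qed.

Lemma Gamma_S z : ~ Gamma_pole z -> CGamma (z + 1) = z * CGamma z.
Proof.
  intros Hz.
  destruct (Gamma_lim z Hz) as [_ H1].
  destruct (Gamma_lim (z + 1) (nonpole_S z Hz)) as [_ H2].
  assert (H3 : filterlim (fun n => z * euler_seq z n * (RtoC (INR n) / (z + RtoC (INR (S n))))) eventually (locally (z * CGamma z * 1))).
  { apply filterlim_Cmult; [|apply q_lim]. apply filterlim_Cmult; [apply filterlim_const|exact H1]. }
  rewrite Cmult_1_r in H3.
  assert (H4 : filterlim (euler_seq (z + 1)) eventually (locally (z * CGamma z))).
  { eapply filterlim_ext_loc; [|exact H3]. exists 1%nat. intros n Hn. destruct n; [lia|].
    rewrite euler_shift; auto. }
  apply (filterlim_locally_unique _ _ _ H2 H4).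
Qed.
Open Scope C_scope.

Open Scope C_scope.

Fixpoint rising (z : C) (m : nat) : C :=
  match m with O => 1 | S m => rising z m * (z + RtoC (INR m)) end.

Fixpoint rprod (r : R) (m : nat) : R :=
  match m with O => 1%R | S m => (rprod r m * (r + INR m))%R end.

Lemma nonpole_add z m : ~ Gamma_pole z -> ~ Gamma_pole (z + RtoC (INR m)).
Proof.
  intros Hz. induction m.
  - simpl. rewrite Cplus_0_r. auto.
  - rewrite RtoC_INR_S, Cplus_assoc. apply nonpole_S. auto.
Qed.

Lemma Gamma_add_nat z m : ~ Gamma_pole z -> CGamma (z + RtoC (INR m)) = CGamma z * rising z m.
Proof.
  intros Hz. induction m.
  - simpl. rewrite Cplus_0_r. ring.
  - simpl rising. rewrite RtoC_INR_S, Cplus_assoc, Gamma_S, IHm by (apply nonpole_add; auto). ring.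
Qed.

Lemma rising_R r m : rising (RtoC r) m = RtoC (rprod r m).
Proof.
  induction m; simpl. reflexivity. rewrite IHm, <- RtoC_plus, <- RtoC_mult. reflexivity.
Qed.

Lemma nonpole_pos (r : R) : (0 < r)%R -> ~ Gamma_pole (RtoC r).
Proof.
  intros Hr [k Hk]. apply (f_equal fst) in Hk. simpl in Hk. pose proof (pos_INR k). lra.
Qed.

Lemma Poch_R r m : (0 < r)%R -> Poch (RtoC r) (INR m * 1) = RtoC (rprod r m).
Proof.
  intros Hr. unfold Poch. rewrite Rmult_1_r, Gamma_add_nat by (apply nonpole_pos; auto).
  rewrite rising_R. field. apply Gamma_lim, nonpole_pos; auto.
Qed.

Lemma Poch_split (p : C * R) m : admissible p ->
  Poch (fst p) (INR (5 * m + 2) * snd p) =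
  Poch (fst p) (INR 2 * snd p) * Poch (fst (shift25 p)) (INR m * snd (shift25 p)).
Proof.
  destruct p as [a A]. intros [HA Hadm]. simpl fst in *; simpl snd in *. unfold Poch.
  assert (E1 : RtoC (2 * A) = RtoC (INR 2 * A)) by (f_equal; simpl; ring).
  rewrite E1.
  assert (E2 : a + RtoC (INR 2 * A) + RtoC (INR m * (5 * A)) = a + RtoC (INR (5 * m + 2) * A)).
  { rewrite <- Cplus_assoc, <- RtoC_plus. f_equal. f_equal.
    rewrite plus_INR, mult_INR. simpl. ring. }
  rewrite E2.
  destruct (Gamma_lim _ (Hadm 2%nat)) as [Hnz _].
  assert (Ha0 : ~ Gamma_pole a).
  { pose proof (Hadm 0%nat) as H0. simpl fst in H0; simpl snd in H0.
    replace (a + RtoC (INR 0 * A)) with a in H0; auto.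
    apply Ceq; simpl; ring. }
  destruct (Gamma_lim _ Ha0) as [Hnz0 _].
  field. split; auto.
Qed.

Lemma poch_prod_split ps m : List.Forall admissible ps ->
  poch_prod ps (5 * m + 2) = poch_prod ps 2 * poch_prod (map shift25 ps) m.
Proof.
  induction 1; unfold poch_prod in *; cbn [map fold_right]. ring.
  rewrite IHForall. rewrite Poch_split by auto. ring.
Qed.

Definition R4 m := (rprod (3/5) m * rprod (4/5) m * rprod (6/5) m * rprod (7/5) m)%R.

Lemma poch_prod_4 qs m :
  poch_prod ((RtoC (3/5), 1%R) :: (RtoC (4/5), 1%R) :: (RtoC (6/5), 1%R) :: (RtoC (7/5), 1%R) :: qs) m
  = RtoC (R4 m) * poch_prod qs m.
Proof.
  unfold poch_prod; simpl. rewrite !Poch_R by lra. unfold R4. rewrite !RtoC_mult. ring.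
Qed.

Lemma fact_5m2 m : INR (fact (5 * m + 2)) = (2 * 5 ^ (5 * m) * INR (fact m) * R4 m)%R.
Proof.
  induction m.
  - simpl. unfold R4; simpl. ring.
  - replace (5 * S m + 2)%nat with (S (S (S (S (S (5 * m + 2))))))%nat by lia.
    rewrite !fact_simpl, !mult_INR, IHm.
    replace (5 * S m)%nat with (5 + 5 * m)%nat by lia. rewrite pow_add.
    unfold R4; simpl rprod. rewrite !S_INR, plus_INR, mult_INR. simpl INR. field.
Qed.
Open Scope C_scope.

Open Scope C_scope.

Lemma alpha_pow j : alpha5 ^ j = Cexp ((0%R, (2 * PI * INR j / 5)%R)).
Proof.
  induction j.
  - simpl. replace (2 * PI * 0 / 5)%R with 0%R by field. rewrite <- Cexp_0. reflexivity.
  - rewrite Cpow_S, IHj. unfold alpha5. rewrite <- Cexp_add. f_equal.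
    apply Ceq; cbn [fst snd Cplus]; [ring | rewrite S_INR; field].
Qed.

Lemma alpha5_5 : alpha5 ^ 5 = 1.
Proof.
  rewrite alpha_pow. replace (2 * PI * INR 5 / 5)%R with (2 * PI)%R by (simpl; field).
  unfold Cexp, Re, Im; simpl. rewrite exp_0, cos_2PI, sin_2PI. apply Ceq; simpl; ring.
Qed.

Lemma alpha_ne1 j : (1 <= j <= 4)%nat -> alpha5 ^ j <> 1.
Proof.
  intros Hj E. rewrite alpha_pow in E. apply (f_equal snd) in E.
  unfold Cexp, Re, Im in E; simpl in E. rewrite exp_0, Rmult_1_l in E.
  pose proof PI_RGT_0.
  assert (HJ : (1 <= INR j <= 4)%R) by (split; [apply (le_INR 1)|replace 4%R with (INR 4) by (simpl; ring); apply le_INR]; lia).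
  destruct (Nat.le_gt_cases j 2) as [Hl|Hl].
  - assert (INR j <= 2)%R by (replace 2%R with (INR 2) by (simpl; ring); apply le_INR; lia).
    assert (0 < sin (2 * PI * INR j / 5))%R by (apply sin_gt_0; nra). lra.
  - assert (3 <= INR j)%R by (replace 3%R with (INR 3) by (simpl; ring); apply le_INR; lia).
    assert (sin (2 * PI * INR j / 5) < 0)%R by (apply sin_lt_0; nra). lra.
Qed.

Lemma geo5 (b : C) : b ^ 5 = 1 -> b <> 1 -> 1 + b + b^2 + b^3 + b^4 = 0.
Proof.
  intros H5 H1.
  assert (E : (b - 1) * (1 + b + b^2 + b^3 + b^4) = 0).
  { replace ((b - 1) * (1 + b + b^2 + b^3 + b^4)) with (b^5 - 1) by ring. rewrite H5. ring. }
  assert (Hb : b - 1 <> 0) by (intro E0; apply H1; replace b with (b - 1 + 1) by ring; rewrite E0; ring).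
  replace (1 + b + b^2 + b^3 + b^4) with ((b - 1) * (1 + b + b^2 + b^3 + b^4) / (b - 1)) by (field; auto).
  rewrite E. field. auto.
Qed.

Lemma sum4 (f : nat -> C) : sum_n f 4 = f 0%nat + f 1%nat + f 2%nat + f 3%nat + f 4%nat.
Proof. rewrite !sum_Sn, sum_O. reflexivity. Qed.

Lemma geo_alpha n :
  1 + alpha5 ^ (2*n+1) + (alpha5 ^ (2*n+1))^2 + (alpha5 ^ (2*n+1))^3 + (alpha5 ^ (2*n+1))^4
  = if Nat.eqb (n mod 5) 2 then 5 else 0.
Proof.
  assert (Hb5 : (alpha5 ^ (2*n+1)) ^ 5 = 1).
  { rewrite <- Cpow_mult_r. replace ((2 * n + 1) * 5)%nat with (5 * (2*n+1))%nat by lia.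
    rewrite Cpow_mult_r, alpha5_5, Cpow_1_l. reflexivity. }
  pose proof (Nat.div_mod_eq n 5) as Hd. pose proof (Nat.mod_upper_bound n 5 ltac:(lia)) as Hm.
  set (q := (n / 5)%nat) in *. set (r := (n mod 5)%nat) in *.
  assert (Hb : alpha5 ^ (2*n+1) = alpha5 ^ (2*r+1)).
  { replace (2*n+1)%nat with (5 * (2*q) + (2*r+1))%nat by lia.
    rewrite Cpow_add_r, Cpow_mult_r, alpha5_5, Cpow_1_l. ring. }
  destruct (Nat.eqb_spec r 2) as [Hr|Hr].
  - rewrite Hb, Hr. replace (2*2+1)%nat with 5%nat by reflexivity. rewrite alpha5_5.
    rewrite !Cpow_1_l. apply Ceq; simpl; ring.
  - apply geo5; auto. rewrite Hb.
    assert (r = 0 \/ r = 1 \/ r = 3 \/ r = 4)%nat as Hc by lia.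
    destruct Hc as [ -> | [ -> | [ -> | -> ]]]; simpl Nat.add; simpl Nat.mul.
    + apply alpha_ne1; lia.
    + apply alpha_ne1; lia.
    + replace 7%nat with (5 + 2)%nat by reflexivity. rewrite Cpow_add_r, alpha5_5, Cmult_1_l. apply alpha_ne1; lia.
    + replace 9%nat with (5 + 4)%nat by reflexivity. rewrite Cpow_add_r, alpha5_5, Cmult_1_l. apply alpha_ne1; lia.
Qed.
Open Scope C_scope.

Open Scope C_scope.
Ltac Cring := match goal with |- @eq _ ?x ?y => change (@eq C x y) end; ring.

Lemma CSeries_eq (a : nat -> C) l : is_series a l -> CSeries a = l.
Proof.
  intros H. unfold CSeries.
  apply (@iota_unique C_AbsRing C_CompleteNormedModule); auto.
  intros y Hy. apply (filterlim_locally_unique _ _ _ Hy H).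
Qed.

Lemma sum_n_C_S (a : nat -> C) n : sum_n a (S n) = sum_n a n + a (S n).
Proof. rewrite sum_Sn. reflexivity. Qed.

Lemma sparse (b e : nat -> C) E :
  (forall q, b (5 * q + 2)%nat = e q) ->
  (forall q r, (r < 5)%nat -> r <> 2%nat -> b (5 * q + r)%nat = 0) ->
  is_series e E -> is_series b E.
Proof.
  intros Hbe Hz HE.
  assert (Hb0 : forall q r, (r < 5)%nat -> r <> 2%nat -> b (5 * q + r)%nat = 0) by exact Hz.
  assert (P : forall q, sum_n b (5 * q + 2) = sum_n e q).
  { induction q.
    - simpl. rewrite !sum_n_C_S, sum_O.
      assert (E0 : b 0%nat = 0) by exact (Hb0 0%nat 0%nat ltac:(lia) ltac:(lia)).
      assert (E1 : b 1%nat = 0) by exact (Hb0 0%nat 1%nat ltac:(lia) ltac:(lia)).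
      assert (E2 : b 2%nat = e 0%nat) by exact (Hbe 0%nat).
      rewrite E0, E1, E2, sum_O. Cring.
    - replace (5 * S q + 2)%nat with (S (S (S (S (S (5 * q + 2))))))%nat by lia.
      rewrite !sum_n_C_S, IHq.
      rewrite <- (Hbe (S q)). replace (S (S (S (S (S (5 * q + 2)))))) with (5 * S q + 2)%nat by lia.
      replace (S (5 * q + 2)) with (5 * q + 3)%nat by lia.
      replace (S (5 * q + 3)) with (5 * q + 4)%nat by lia.
      replace (S (5 * q + 4)) with (5 * S q + 0)%nat by lia.
      replace (S (5 * S q + 0)) with (5 * S q + 1)%nat by lia.
      rewrite !Hb0 by lia. Cring. }
  assert (P' : forall q j, (j < 5)%nat -> sum_n b (5 * q + 2 + j) = sum_n e q).
  { intros q j Hj. induction j.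
    - rewrite Nat.add_0_r. auto.
    - rewrite Nat.add_succ_r, sum_n_C_S, IHj by lia.
      destruct (Nat.eq_dec j 0) as [->|].
      + replace (S (5 * q + 2 + 0)) with (5 * q + 3)%nat by lia. rewrite Hb0 by lia. Cring.
      + destruct (Nat.eq_dec j 1) as [->|].
        * replace (S (5 * q + 2 + 1)) with (5 * q + 4)%nat by lia. rewrite Hb0 by lia. Cring.
        * destruct (Nat.eq_dec j 2) as [->|].
          -- replace (S (5 * q + 2 + 2)) with (5 * S q + 0)%nat by lia. rewrite Hb0 by lia. Cring.
          -- assert (j = 3%nat) by lia. subst.
             replace (S (5 * q + 2 + 3)) with (5 * S q + 1)%nat by lia. rewrite Hb0 by lia. Cring. }
  intros Pr HP. destruct (HE Pr HP) as [Q HQ].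
  exists (5 * Q + 2)%nat. intros N HN.
  pose proof (Nat.div_mod_eq (N - 2) 5) as Hd. pose proof (Nat.mod_upper_bound (N - 2) 5 ltac:(lia)) as Hm.
  set (q := ((N - 2) / 5)%nat) in *. set (j := ((N - 2) mod 5)%nat) in *.
  replace N with (5 * q + 2 + j)%nat by lia.
  unfold filtermap. rewrite P' by auto. apply HQ. lia.
Qed.
Open Scope C_scope.

Open Scope C_scope.

Lemma poch_nz p n : admissible p -> Poch (fst p) (INR n * snd p) <> 0.
Proof.
  destruct p as [a A]. intros [HA Hadm]. simpl fst in *; simpl snd in *. unfold Poch.
  assert (Ha0 : ~ Gamma_pole a).
  { pose proof (Hadm 0%nat) as H0. replace (a + RtoC (INR 0 * A)) with a in H0; auto.
    apply Ceq; simpl; ring. }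
  apply Cdiv_nz; apply Gamma_lim; auto.
Qed.

Lemma admissible_shift p : admissible p -> admissible (shift25 p).
Proof.
  destruct p as [a A]. intros [HA Hadm]. simpl fst in *; simpl snd in *. split; simpl; [lra|].
  intros m. specialize (Hadm (5 * m + 2)%nat).
  replace (a + RtoC (2 * A) + RtoC (INR m * (5 * A))) with (a + RtoC (INR (5 * m + 2) * A)); auto.
  rewrite <- Cplus_assoc, <- RtoC_plus. f_equal. f_equal. rewrite plus_INR, mult_INR. simpl. ring.
Qed.

Lemma poch_prod_nz l n : List.Forall admissible l -> poch_prod l n <> 0.
Proof.
  induction 1; unfold poch_prod in *; cbn [map fold_right].
  - apply C1_nz.
  - apply Cmult_neq_0; auto. apply poch_nz; auto.
Qed.

Lemma Forall_shift l : List.Forall admissible l -> List.Forall admissible (map shift25 l).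
Proof. induction 1; simpl; constructor; auto. apply admissible_shift; auto. Qed.

Lemma rprod_pos r m : (0 < r)%R -> (0 < rprod r m)%R.
Proof. intros Hr. induction m; simpl. lra. pose proof (pos_INR m). nra. Qed.

Lemma R4_pos m : (0 < R4 m)%R.
Proof. unfold R4. repeat apply Rmult_lt_0_compat; apply rprod_pos; lra. Qed.

Lemma RtoC_nz (r : R) : r <> 0%R -> RtoC r <> 0.
Proof. intros H E. apply H. apply (f_equal fst) in E. exact E. Qed.

Lemma main_term ps qs c x q :
  List.Forall admissible ps -> List.Forall admissible qs ->
  FW_term ps qs (c * x ^ 2) (5 * q + 2) * 5 =
  poch_prod ps 2 / poch_prod qs 2 * (5 * c ^ 2 * x ^ 4 / 2) *
  FW_term (map shift25 ps)
     ((RtoC (3/5), 1%R) :: (RtoC (4/5), 1%R) :: (RtoC (6/5), 1%R) :: (RtoC (7/5), 1%R) :: map shift25 qs)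
     ((c * x ^ 2 / 5) ^ 5) q.
Proof.
  intros Hps Hqs. unfold FW_term.
  rewrite (poch_prod_split ps), (poch_prod_split qs), poch_prod_4, fact_5m2 by auto.
  assert (EW : ((c * x ^ 2 / 5) ^ 5) ^ q = (c * x^2)^(5*q) * / (RtoC 5 ^ (5*q))).
  { rewrite <- Cpow_mult_r. unfold Cdiv. rewrite Cpow_mult_l, Cpow_inv; [reflexivity|].
    apply RtoC_nz. lra. }
  rewrite EW, Cpow_add_r.
  rewrite !RtoC_mult, RtoC_pow.
  pose proof (poch_prod_nz qs 2 Hqs).
  pose proof (poch_prod_nz (map shift25 qs) q (Forall_shift qs Hqs)).
  pose proof (RtoC_nz _ (Rgt_not_eq _ _ (R4_pos q))).
  pose proof (RtoC_nz _ (INR_fact_neq_0 q)).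
  assert (RtoC 5 ^ (5 * q) <> 0) by (apply Cpow_nz, RtoC_nz; lra).
  assert (RtoC 5 <> 0) by (apply RtoC_nz; lra).
  assert (RtoC 2 <> 0) by (apply RtoC_nz; lra).
  set (X := (c * x ^ 2) ^ (5 * q)). set (Y := RtoC 5 ^ (5 * q)).
  field. repeat split; auto.
Qed.
Open Scope C_scope.

Open Scope C_scope.

Lemma series_sumK (f : nat -> nat -> C) (l w : nat -> C) :
  (forall k, (k <= 4)%nat -> is_series (f k) (l k)) ->
  forall K, (K <= 4)%nat ->
  is_series (fun n => sum_n (fun k => w k * f k n) K) (sum_n (fun k => w k * l k) K).
Proof.
  intros Hf K. induction K; intros HK.
  - apply (is_series_ext (fun n => scal (w 0%nat) (f 0%nat n))).
    { intros n. rewrite sum_O. reflexivity. }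
    rewrite sum_O. apply (is_series_scal (w 0%nat) (f 0%nat) (l 0%nat)). apply Hf; lia.
  - apply (is_series_ext (fun n => plus (sum_n (fun k => w k * f k n) K) (scal (w (S K)) (f (S K) n)))).
    { intros n. rewrite sum_Sn. reflexivity. }
    rewrite sum_Sn.
    pose proof (@is_series_plus C_AbsRing C_NormedModule _ _ _ _ (IHK ltac:(lia))
      (is_series_scal (w (S K)) (f (S K)) (l (S K)) (Hf (S K) HK))) as HP.
    exact HP.
Qed.

Lemma alpha_term k n : alpha5 ^ k * ((alpha5 ^ k) ^ 2) ^ n = (alpha5 ^ (2 * n + 1)) ^ k.
Proof.
  rewrite <- !Cpow_mult_r, <- Cpow_add_r. f_equal. lia.
Qed.

Lemma B_eq ps qs c x n :
  sum_n (fun k => alpha5 ^ k * FW_term ps qs (c * (x * alpha5 ^ k) ^ 2) n) 4 =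
  FW_term ps qs (c * x ^ 2) n * (if Nat.eqb (n mod 5) 2 then 5 else 0).
Proof.
  rewrite <- geo_alpha.
  assert (T : forall k, alpha5 ^ k * FW_term ps qs (c * (x * alpha5 ^ k) ^ 2) n =
                      FW_term ps qs (c * x ^ 2) n * (alpha5 ^ (2 * n + 1)) ^ k).
  { intros k. unfold FW_term. rewrite <- alpha_term.
    rewrite !Cpow_mult_l. unfold Cdiv. ring. }
  rewrite sum4, !T. simpl Cpow. match goal with |- @eq _ ?x ?y => change (@eq C x y) end. ring.
Qed.

Theorem theorem6 (ps qs : list (C * R)) (c x : C) :
  List.Forall admissible ps ->
  List.Forall admissible qs ->
  (forall k : nat, (k < 5)%nat ->
     ex_series (FW_term ps qs (c * (x * alpha5 ^ k) ^ 2))) ->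
  ex_series (FW_term (map shift25 ps)
                     ((RtoC (3/5), 1%R) :: (RtoC (4/5), 1%R) ::
                      (RtoC (6/5), 1%R) :: (RtoC (7/5), 1%R) :: map shift25 qs)
                     ((c * x ^ 2 / 5) ^ 5)) ->
  sum_n (fun k => alpha5 ^ k * FoxWright ps qs (c * (x * alpha5 ^ k) ^ 2)) 4
  = poch_prod ps 2 / poch_prod qs 2 * (5 * c ^ 2 * x ^ 4 / 2) *
    FoxWright (map shift25 ps)
              ((RtoC (3/5), 1%R) :: (RtoC (4/5), 1%R) ::
               (RtoC (6/5), 1%R) :: (RtoC (7/5), 1%R) :: map shift25 qs)
              ((c * x ^ 2 / 5) ^ 5).
Proof.
  intros Hps Hqs H3 [D HD].
  assert (HL : forall k, (k <= 4)%nat ->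
     is_series (fun n => FW_term ps qs (c * (x * alpha5 ^ k) ^ 2) n)
               (FoxWright ps qs (c * (x * alpha5 ^ k) ^ 2))).
  { intros k Hk. destruct (H3 k ltac:(lia)) as [l Hl]. unfold FoxWright.
    rewrite (CSeries_eq _ _ Hl). exact Hl. }
  pose proof (series_sumK (fun k n => FW_term ps qs (c * (x * alpha5 ^ k) ^ 2) n)
                (fun k => FoxWright ps qs (c * (x * alpha5 ^ k) ^ 2)) (fun k => alpha5 ^ k) HL 4 ltac:(lia)) as HS.
  cbv beta in HS.
  unfold FoxWright at 2. rewrite (CSeries_eq _ _ HD).
  set (K0 := poch_prod ps 2 / poch_prod qs 2 * (5 * c ^ 2 * x ^ 4 / 2)).
  assert (HE : is_series (fun q => scal K0 (FW_term (map shift25 ps)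
                     ((RtoC (3/5), 1%R) :: (RtoC (4/5), 1%R) ::
                      (RtoC (6/5), 1%R) :: (RtoC (7/5), 1%R) :: map shift25 qs)
                     ((c * x ^ 2 / 5) ^ 5) q)) (scal K0 D)) by exact (@is_series_scal C_AbsRing C_NormedModule K0 _ D HD).
  assert (HB : is_series (fun n => sum_n (fun k => alpha5 ^ k * FW_term ps qs (c * (x * alpha5 ^ k) ^ 2) n) 4) (scal K0 D)).
  { eapply sparse; [| |exact HE].
    - intros q. rewrite B_eq.
      replace ((5 * q + 2) mod 5)%nat with 2%nat.
      2:{ replace (5 * q + 2)%nat with (2 + q * 5)%nat by lia. rewrite Nat.Div0.mod_add. reflexivity. }
      simpl Nat.eqb. cbv iota. unfold K0. rewrite main_term by auto. reflexivity.
    - intros q r Hr Hr2. rewrite B_eq.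
      replace ((5 * q + r) mod 5)%nat with r.
      2:{ replace (5 * q + r)%nat with (r + q * 5)%nat by lia. rewrite Nat.Div0.mod_add. rewrite Nat.mod_small; auto. }
      apply Nat.eqb_neq in Hr2. rewrite Hr2. ring. }
  apply (filterlim_locally_unique _ _ _ HS HB).
Qed.
Open Scope C_scope.
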